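(* Let $\mathcal{T}$ be a conforming triangulation of a polygonal domain $\Omega\subset\mathbb{R}^2$ satisfying the mesh regularity condition of the context, with $P_1$ space $\mathcal V$, and let $b$ satisfy the standing assumptions (S). Let $w,u\in\mathcal V$ and $z(t)\in\mathcal V$ for $0\le t\le1$, let $v$ be the test function associated with $w$, and let $T\in\mathcal T_c$ have vertices $a_i,a_j,a_k$ ordered so that $w(a_i)\ge w(a_j)\ge w(a_k)$, with $w(a_k)\le0$. Then $$\int_T\int_0^1\frac{\partial b}{\partial\eta}(x,z(t))\,w\,v\,dx\,dt\ge-\delta_T(w)\,\frac{7B_\eta|T|}{6},$$ where $|T|$ is the area of $T$.
   Context: Setting: $\Omega\subset\mathbb{R}^2$ polygonal, $\partial\Omega=\Gamma_D\cup\Gamma_N$ with $\Gamma_D$ of positive measure; $\mathcal{T}$ a conforming triangulation resolving $\Gamma_D,\Gamma_N$; $\mathcal{D}$ the set of vertices of $\mathcal T$ not on $\Gamma_D$; $\mathcal{V}$ the continuous piecewise linear functions on $\mathcal T$ vanishing on $\Gamma_D$. Mesh regularity: there are $0<t_{min}\le t_{max}<\pi/2$ with every interior angle of every $T\in\mathcal T$ in $[t_{min},t_{max}]$. For $\phi\in\mathcal V$, $\delta_T(\phi):=\max_{i,j\in\{1,2,3\}}|\phi(a_i)-\phi(a_j)|$ over the vertices of $T$. Test function: for $w\in\mathcal V$, $v\in\mathcal V$ is defined by $v(a)=1$ if $w(a)>0$ and $v(a)=0$ if $w(a)\le0$, for $a\in\mathcal D$. $\mathcal{T}_c$ is the set of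 $T\in\mathcal T$ on which $v$ is neither identically $1$ nor identically $0$. (S) $a(x,\eta,\xi)=A(x,\eta,\xi)\xi$ with $A:\Omega\times\mathbb R\times\mathbb R^2\to\mathbb R$; $a$ and $b(x,\eta)$ Carathéodory, $C^1$ in $(\eta,\xi)$ (resp. $\eta$) for a.e. $x$, measurable in $x$; there are $\gamma_a>0,K_\eta>0,B_\eta\ge0$ with, for a.e. $x$ and all $\eta,\xi,\zeta$: $\sum_{i,j}\frac{\partial a_i}{\partial\xi_j}(x,\eta,\xi)\zeta_i\zeta_j\ge\gamma_a|\zeta|^2$, $|\partial A/\partial\eta|\le K_\eta$, $0\le\partial b/\partial\eta\le B_\eta$. *)

(* Defs.v *)
From HB Require Import structures.
From mathcomp Require Import all_boot all_order all_algebra.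
From mathcomp Require Import all_classical all_reals all_analysis.
Set Implicit Arguments. Unset Strict Implicit. Unset Printing Implicit Defensive.
Import Order.TTheory GRing.Theory Num.Theory.
Import numFieldNormedType.Exports.
Local Open Scope classical_set_scope.
Local Open Scope ring_scope.

Section Defs.
Variable R : realType.

Definition pt := (R * R)%type.
Definition tri := (pt * pt * pt)%type.
Definition tv1 (T : tri) : pt := T.1.1.
Definition tv2 (T : tri) : pt := T.1.2.
Definition tv3 (T : tri) : pt := T.2.
Definition tverts (T : tri) : seq pt := [:: tv1 T; tv2 T; tv3 T].

Definition leb2 := (@lebesgue_measure R \x @lebesgue_measure R)%E.

Definition det2 (a b c : pt) : R :=
  (b.1 - a.1) * (c.2 - a.2) - (b.2 - a.2) * (c.1 - a.1).

Definition nondegenerate (T : tri) := det2 (tv1 T) (tv2 T) (tv3 T) != 0.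

Definition hull (T : tri) : set pt :=
  [set x | exists l1 l2 l3 : R, [/\ 0 <= l1, 0 <= l2, 0 <= l3, l1 + l2 + l3 = 1 &
     x.1 = l1 * (tv1 T).1 + l2 * (tv2 T).1 + l3 * (tv3 T).1 /\
     x.2 = l1 * (tv1 T).2 + l2 * (tv2 T).2 + l3 * (tv3 T).2]].

Definition segment (a b : pt) : set pt :=
  [set x | exists l : R, [/\ 0 <= l, l <= 1,
     x.1 = (1 - l) * a.1 + l * b.1 & x.2 = (1 - l) * a.2 + l * b.2]].

Definition area (T : tri) : R := fine (leb2 (hull T)).

Definition angle (a b c : pt) : R :=
  acos (((b.1 - a.1) * (c.1 - a.1) + (b.2 - a.2) * (c.2 - a.2)) /
        (Num.sqrt ((b.1 - a.1) ^+ 2 + (b.2 - a.2) ^+ 2) *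
         Num.sqrt ((c.1 - a.1) ^+ 2 + (c.2 - a.2) ^+ 2))).

Definition angles_in (tmin tmax : R) (T : tri) :=
  let: (a, b, c) := (tv1 T, tv2 T, tv3 T) in
  [/\ tmin <= angle a b c <= tmax, tmin <= angle b c a <= tmax
    & tmin <= angle c a b <= tmax].

Definition mesh_union (M : seq tri) : set pt := \bigcup_(T in [set T | T \in M]) hull T.

Definition conforming (M : seq tri) :=
  (forall T, T \in M -> nondegenerate T) /\ uniq M /\
  forall T T', T \in M -> T' \in M -> T != T' ->
    hull T `&` hull T' = set0 \/
    (exists a, [/\ a \in tverts T, a \in tverts T' & hull T `&` hull T' = [set a]]) \/
    (exists a b, [/\ a != b, [&& a \in tverts T, b \in tverts T, a \in tverts T' & b \in tverts T']
                 & hull T `&` hull T' = segment a b]).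

Definition Omega (M : seq tri) : set pt := (mesh_union M)°.

Definition bdry (A : set pt) : set pt := closure A `\` A°.

(* Gamma_D given as a nonempty list of mesh edges lying on the boundary of
   Omega (so the mesh resolves Gamma_D and Gamma_D has positive length) *)
Definition GammaD (ED : seq (pt * pt)) : set pt :=
  \bigcup_(e in [set e | e \in ED]) segment e.1 e.2.

Definition is_mesh_edge (M : seq tri) (e : pt * pt) :=
  e.1 != e.2 /\ exists T, [/\ T \in M, e.1 \in tverts T & e.2 \in tverts T].

Definition valid_dirichlet (M : seq tri) (ED : seq (pt * pt)) :=
  ED != [::] /\ (forall e, e \in ED -> is_mesh_edge M e) /\
  GammaD ED `<=` bdry (Omega M).

Definition Dnodes (M : seq tri) (ED : seq (pt * pt)) : set pt :=
  [set a | (exists T, T \in M /\ a \in tverts T) /\ ~ GammaD ED a].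

(* P1 space: continuous piecewise linear on M, vanishing on Gamma_D.
   Continuity is automatic: f is a single function that is affine on each
   closed triangle. *)
Definition P1 (M : seq tri) (ED : seq (pt * pt)) (f : pt -> R) :=
  (forall T, T \in M -> exists al be ga : R,
     forall x, hull T x -> f x = al * x.1 + be * x.2 + ga) /\
  (forall x, GammaD ED x -> f x = 0).

Definition test_fun (M : seq tri) (ED : seq (pt * pt)) (w v : pt -> R) :=
  P1 M ED v /\
  forall a, Dnodes M ED a -> v a = (if 0 < w a then 1 else 0).

Definition in_Tc (M : seq tri) (v : pt -> R) (T : tri) :=
  T \in M /\ ~ (forall x, hull T x -> v x = 1) /\ ~ (forall x, hull T x -> v x = 0).

Definition deltaT (T : tri) (f : pt -> R) : R :=
  Num.max `|f (tv1 T) - f (tv2 T)|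
    (Num.max `|f (tv2 T) - f (tv3 T)|  `|f (tv1 T) - f (tv3 T)|).

Definition assumptions_b (M : seq tri) (b : pt -> R -> R) (Beta : R) :=
  (forall eta, measurable_fun (Omega M) (fun x => b x eta)) /\
  {ae leb2, forall x, Omega M x ->
     (forall eta, derivable (b x) eta 1) /\ continuous (derive1 (b x)) /\
     (forall eta, 0 <= derive1 (b x) eta <= Beta)}.

End Defs.

(* Main.v *)
Require Import Defs.
From HB Require Import structures.
From mathcomp Require Import all_boot all_order all_algebra.
From mathcomp Require Import all_classical all_reals all_analysis.
From mathcomp Require Import ring lra.
Import Order.TTheory GRing.Theory Num.Theory.
Import numFieldNormedType.Exports.
Local Open Scope classical_set_scope.
Local Open Scope ring_scope.
Set Implicit Arguments.
Unset Strict Implicit.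

Section Gen.
Local Open Scope ereal_scope.
Context d (T : measurableType d) (R : realType) (mu : {measure set T -> \bar R}).
Import HBNNSimple.

Lemma int_ub (D : set T) (mD : measurable D) (f : T -> \bar R) (c : R) :
  (0 <= c)%R -> (forall x, D x -> 0 <= f x) ->
  {ae mu, forall x, D x -> f x <= c%:E} ->
  \int[mu]_(x in D) f x <= c%:E * mu D.
Proof.
move=> c0 f0 ae; rewrite ge0_integralE //.
apply: ge_ereal_sup => _ [h /= hf <-].
have -> : sintegral mu h = \int[mu]_(x in D) (h x)%:E.
  rewrite integral_nnsfun //; congr sintegral; apply/funext => x.
  rewrite /patch; case: ifPn => // /negP; rewrite inE => nDx.
  apply/eqP; rewrite eq_le fun_ge0 andbT -lee_fin (le_trans (hf x)) //.
  by rewrite /patch; case: ifPn => //; rewrite inE.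
rewrite -integral_cst //; apply: ae_ge0_le_integral => //.
- by move=> x _; rewrite lee_fin fun_ge0.
- by apply/measurable_realfun.measurable_EFinP; exact: measurable_funS (measurable_funPT h).
apply: filterS ae => x H Dx; rewrite (le_trans (hf x)) //.
by rewrite /patch; case: ifPn => _; [exact: H|].
Qed.

Lemma int_lb (D : set T) (mD : measurable D) (f : T -> \bar R) (c : R) :
  (0 <= c)%R -> {ae mu, forall x, D x -> (- c)%:E <= f x} ->
  - (c%:E * mu D) <= \int[mu]_(x in D) f x.
Proof.
move=> c0 ae; rewrite integralE.
have p : 0 <= \int[mu]_(x in D) f^\+ x by apply: integral_ge0 => x _; exact: funepos_ge0.
have n : \int[mu]_(x in D) f^\- x <= c%:E * mu D.
  apply: int_ub => //.
  apply: filterS ae => x H Dx; rewrite funenegE ge_max lee_fin c0 andbT.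
  by rewrite leeNl -EFinN H.
rewrite -[X in X <= _]add0e; apply: leeB => //.
Qed.
End Gen.
Section Geo.
Variable R : realType.
Definition aff (p q r : R) (x : pt R) := p * x.1 + q * x.2 + r.

Lemma aff_meas p q r : measurable_fun setT (aff p q r).
Proof.
apply: measurable_realfun.measurable_funD; last exact: measurable_cst.
apply: measurable_realfun.measurable_funD; apply: measurable_realfun.measurable_funM; try exact: measurable_cst.
  exact: measurable_fst.
exact: measurable_snd.
Qed.

Lemma aff_cont p q r : continuous (aff p q r).
Proof.
move=> x; rewrite /aff; apply: cvgD; last exact: cvg_cst.
apply: cvgD; apply: cvgM; try exact: cvg_cst.
  exact: cvg_fst.
exact: cvg_snd.
Qed.

Lemma aff_pre p q r (Y : set R) : measurable Y -> measurable (aff p q r @^-1` Y).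
Proof. by move=> mY; rewrite -[_ @^-1` _]setTI; apply: aff_meas. Qed.

Lemma line_null p q r : p != 0 \/ q != 0 ->
  @leb2 R [set x | aff p q r x = 0] = 0%E.
Proof.
move=> pq; have [q0|q0] := eqVneq q 0.
  have p0 : p != 0 by case: pq => //; rewrite q0 eqxx.
  have -> : [set x | aff p q r x = 0] = [set - r / p] `*` [set: R].
    apply/seteqP; split => [[x y]|[x y]]; rewrite /aff /= q0.
      move=> h; split => //=; apply: (mulIf p0); rewrite divfK //; nra.
    move=> [/= xe _]; rewrite xe [p * _]mulrC divfK //; lra.
  rewrite /leb2 (@product_measure1E _ _ _ _ _ lebesgue_measure lebesgue_measure); last 2 first.
  - exact: measurable_set1.
  - by [].
  rewrite [X in (X * _)%E](_ : _ = 0%E) ?mul0e //; exact: lebesgue_measure_set1.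
rewrite /leb2 /product_measure1; apply: integral0_eq => x _ /=.
have -> : xsection [set x | aff p q r x = 0] x = [set - (p * x + r) / q].
  apply/seteqP; split => y; rewrite /xsection /= inE /aff /=.
    move=> h; apply: (mulIf q0); rewrite divfK //; nra.
  move=> ->; rewrite [q * _]mulrC divfK //; lra.
exact: lebesgue_measure_set1.
Qed.
End Geo.
Arguments aff {R}.
Arguments aff_meas {R}.
Arguments aff_cont {R}.
Arguments aff_pre {R}.
Arguments line_null {R}.
Section Bary.
Import HBNNSimple.
Variable R : realType.
Variables a b c : pt R.
Let D := det2 a b c.
Hypothesis D0 : D != 0.
Definition bc1 (x : pt R) := det2 x b c / D.
Definition bc2 (x : pt R) := det2 a x c / D.
Definition bc3 (x : pt R) := det2 a b x / D.

Lemma bc1_aff : bc1 =1 aff ((b.2 - c.2) / D) ((c.1 - b.1) / D) ((b.1 * c.2 - b.2 * c.1) / D).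
Proof. move=> x; rewrite /bc1 /aff /det2; ring. Qed.
Lemma bc2_aff : bc2 =1 aff ((c.2 - a.2) / D) ((a.1 - c.1) / D) ((a.2 * c.1 - a.1 * c.2) / D).
Proof. move=> x; rewrite /bc2 /aff /det2; ring. Qed.
Lemma bc3_aff : bc3 =1 aff ((a.2 - b.2) / D) ((b.1 - a.1) / D) ((a.1 * b.2 - a.2 * b.1) / D).
Proof. move=> x; rewrite /bc3 /aff /det2; ring. Qed.

Lemma bc_sum x : bc1 x + bc2 x + bc3 x = 1.
Proof. move: D0; rewrite /bc1 /bc2 /bc3 /D /det2 => D0'; field; exact: D0'. Qed.

Lemma bc_rec1 x : x.1 = bc1 x * a.1 + bc2 x * b.1 + bc3 x * c.1.
Proof. move: D0; rewrite /bc1 /bc2 /bc3 /D /det2 => D0'; field; exact: D0'. Qed.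
Lemma bc_rec2 x : x.2 = bc1 x * a.2 + bc2 x * b.2 + bc3 x * c.2.
Proof. move: D0; rewrite /bc1 /bc2 /bc3 /D /det2 => D0'; field; exact: D0'. Qed.

Lemma bc_uniq x l1 l2 l3 : l1 + l2 + l3 = 1 ->
  x.1 = l1 * a.1 + l2 * b.1 + l3 * c.1 -> x.2 = l1 * a.2 + l2 * b.2 + l3 * c.2 ->
  [/\ bc1 x = l1, bc2 x = l2 & bc3 x = l3].
Proof.
move=> hs h1 h2; have e1 : l1 = 1 - l2 - l3 by lra.
move: D0; rewrite /bc1 /bc2 /bc3 /D /det2 h1 h2 e1 => D0'.
by split; field; exact: D0'.
Qed.

Lemma bc_a : [/\ bc1 a = 1, bc2 a = 0 & bc3 a = 0].
Proof. by apply: bc_uniq; rewrite ?mul1r ?mul0r ?addr0. Qed.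
Lemma bc_b : [/\ bc1 b = 0, bc2 b = 1 & bc3 b = 0].
Proof. by apply: bc_uniq; rewrite ?mul1r ?mul0r ?addr0 ?add0r. Qed.
Lemma bc_c : [/\ bc1 c = 0, bc2 c = 0 & bc3 c = 1].
Proof. by apply: bc_uniq; rewrite ?mul1r ?mul0r ?addr0 ?add0r. Qed.
End Bary.

Section Hull.
Variable R : realType.
Implicit Types T : tri R.

Lemma hull_bc T x : det2 (tv1 T) (tv2 T) (tv3 T) != 0 ->
  hull T x <-> [/\ 0 <= bc1 (tv1 T) (tv2 T) (tv3 T) x, 0 <= bc2 (tv1 T) (tv2 T) (tv3 T) x
                 & 0 <= bc3 (tv1 T) (tv2 T) (tv3 T) x].
Proof.
move=> D0; split.
  move=> [l1 [l2 [l3 [h1 h2 h3 hs [hx1 hx2]]]]].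
  by have [-> -> ->] := bc_uniq D0 hs hx1 hx2.
move=> [h1 h2 h3]; exists (bc1 (tv1 T) (tv2 T) (tv3 T) x), (bc2 (tv1 T) (tv2 T) (tv3 T) x),
  (bc3 (tv1 T) (tv2 T) (tv3 T) x); split => //.
  exact: bc_sum.
by split; [exact: bc_rec1|exact: bc_rec2].
Qed.

Lemma hull_v1 T : hull T (tv1 T).
Proof. by exists 1, 0, 0; split; rewrite ?ler01 ?lexx //; [lra|split; ring]. Qed.
Lemma hull_v2 T : hull T (tv2 T).
Proof. by exists 0, 1, 0; split; rewrite ?ler01 ?lexx //; [lra|split; ring]. Qed.
Lemma hull_v3 T : hull T (tv3 T).
Proof. by exists 0, 0, 1; split; rewrite ?ler01 ?lexx //; [lra|split; ring]. Qed.

Lemma aff_comb T (f : pt R -> R) al be ga :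
  (forall x, hull T x -> f x = al * x.1 + be * x.2 + ga) ->
  forall x l1 l2 l3, l1 + l2 + l3 = 1 ->
  x.1 = l1 * (tv1 T).1 + l2 * (tv2 T).1 + l3 * (tv3 T).1 ->
  x.2 = l1 * (tv1 T).2 + l2 * (tv2 T).2 + l3 * (tv3 T).2 ->
  hull T x ->
  f x = l1 * f (tv1 T) + l2 * f (tv2 T) + l3 * f (tv3 T).
Proof.
move=> hf x l1 l2 l3 hs hx1 hx2 hx.
rewrite (hf _ hx) (hf _ (hull_v1 T)) (hf _ (hull_v2 T)) (hf _ (hull_v3 T)) hx1 hx2.
have -> : l1 = 1 - l2 - l3 by lra.
ring.
Qed.

Lemma comb_lb (l1 l2 l3 w1 w2 w3 d : R) : 0 <= l1 -> 0 <= l2 -> 0 <= l3 ->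
  l1 + l2 + l3 = 1 -> - d <= w1 -> - d <= w2 -> - d <= w3 ->
  - d <= l1 * w1 + l2 * w2 + l3 * w3.
Proof. move=> *; nra. Qed.

Lemma comb_01 (l1 l2 l3 v1 v2 v3 : R) : 0 <= l1 -> 0 <= l2 -> 0 <= l3 ->
  l1 + l2 + l3 = 1 -> 0 <= v1 <= 1 -> 0 <= v2 <= 1 -> 0 <= v3 <= 1 ->
  0 <= l1 * v1 + l2 * v2 + l3 * v3 <= 1.
Proof. move=> ? ? ? ? /andP[? ?] /andP[? ?] /andP[? ?]; apply/andP; split; nra. Qed.

Lemma fin_ineq (sw sv d : R) : - d <= sw -> 0 <= sv <= 1 -> 0 <= d -> - d <= sw * sv.
Proof. move=> ? /andP[? ?] ?; nra. Qed.

Lemma key_ineq (l1 l2 l3 w1 w2 w3 v1 v2 v3 d : R) :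
  0 <= l1 -> 0 <= l2 -> 0 <= l3 -> l1 + l2 + l3 = 1 ->
  (v1 = 0 \/ v1 = 1 /\ 0 < w1) -> (v2 = 0 \/ v2 = 1 /\ 0 < w2) ->
  (v3 = 0 \/ v3 = 1 /\ 0 < w3) ->
  `|w1 - w2| <= d -> `|w2 - w3| <= d -> `|w1 - w3| <= d ->
  - d <= (l1 * w1 + l2 * w2 + l3 * w3) * (l1 * v1 + l2 * v2 + l3 * v3).
Proof.
move=> l10 l20 l30 hs hv1 hv2 hv3.
rewrite !ler_norml => /andP[a1 a2] /andP[a3 a4] /andP[a5 a6].
have d0 : 0 <= d by lra.
have v01 (v w : R) : (v = 0 \/ v = 1 /\ 0 < w) -> 0 <= v <= 1.
  by case=> [->|[-> _]]; rewrite ?lexx ?ler01.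
have sv := comb_01 l10 l20 l30 hs (v01 _ _ hv1) (v01 _ _ hv2) (v01 _ _ hv3).
case: hv1 => [v10|[_ w1p]].
  case: hv2 => [v20|[_ w2p]].
    case: hv3 => [v30|[_ w3p]].
      by rewrite v10 v20 v30 !mulr0 !addr0 mulr0; lra.
    by apply: fin_ineq => //; apply: comb_lb => //; lra.
  by apply: fin_ineq => //; apply: comb_lb => //; lra.
by apply: fin_ineq => //; apply: comb_lb => //; lra.
Qed.
End Hull.

Section Hull2.
Variable R : realType.
Implicit Types T : tri R.

Lemma meas_ge0 (f : pt R -> R) p q r : f =1 aff p q r -> measurable [set x | 0 <= f x].
Proof.
move=> hf; have -> : [set x | 0 <= f x] = aff p q r @^-1` [set` `[0, +oo[%R].
  by apply/seteqP; split => x; rewrite /= in_itv /= andbT hf.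
by apply: aff_pre; exact: measurable_itv.
Qed.

Lemma open_gt0 (f : pt R -> R) p q r : f =1 aff p q r -> open [set x | 0 < f x].
Proof.
move=> hf; have -> : [set x | 0 < f x] = aff p q r @^-1` [set y | 0 < y].
  by apply/seteqP; split => x; rewrite /= hf.
by apply: open_comp; [move=> y _; exact: aff_cont|exact: open_gt].
Qed.

Lemma zero_null (f : pt R -> R) p q r u v : f =1 aff p q r -> f u = 1 -> f v = 0 ->
  (@leb2 R).-negligible [set x | f x = 0].
Proof.
move=> hf fu fv.
have -> : [set x | f x = 0] = [set x | aff p q r x = 0].
  by apply/seteqP; split => x; rewrite /= hf.
have pq : p != 0 \/ q != 0.
  case: (eqVneq p 0) => [p0|]; last by left.
  case: (eqVneq q 0) => [q0|]; last by right.
  move: fu fv; rewrite !hf /aff p0 q0 !mul0r !add0r => -> /eqP; by rewrite oner_eq0.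
apply/negligibleP; last exact: line_null.
have -> : [set x | aff p q r x = 0] = aff p q r @^-1` [set 0].
  by apply/seteqP; split => x.
by apply: aff_pre; exact: measurable_set1.
Qed.

Lemma hull_meas T : det2 (tv1 T) (tv2 T) (tv3 T) != 0 -> measurable (hull T).
Proof.
move=> D0.
have -> : hull T = [set x | 0 <= bc1 (tv1 T) (tv2 T) (tv3 T) x] `&`
   [set x | 0 <= bc2 (tv1 T) (tv2 T) (tv3 T) x] `&`
   [set x | 0 <= bc3 (tv1 T) (tv2 T) (tv3 T) x].
  apply/seteqP; split => x.
    by move=> /(hull_bc x D0) [? ? ?].
  by move=> [[? ?] ?]; apply/(hull_bc x D0).
apply: measurableI; first apply: measurableI.
- exact: meas_ge0 (bc1_aff _ _ _).
- exact: meas_ge0 (bc2_aff _ _ _).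
- exact: meas_ge0 (bc3_aff _ _ _).
Qed.

Lemma hull_ae_Omega (M : seq (tri R)) T : T \in M ->
  det2 (tv1 T) (tv2 T) (tv3 T) != 0 ->
  {ae @leb2 R, forall x, hull T x -> Omega M x}.
Proof.
move=> TM D0.
set f1 := bc1 (tv1 T) (tv2 T) (tv3 T).
set f2 := bc2 (tv1 T) (tv2 T) (tv3 T).
set f3 := bc3 (tv1 T) (tv2 T) (tv3 T).
have [a1 a2 a3] := bc_a D0.
have [b1 b2 b3] := bc_b D0.
have [c1 c2 c3] := bc_c D0.
have n1 := zero_null (bc1_aff _ _ _) a1 b1.
have n2 := zero_null (bc2_aff _ _ _) b2 a2.
have n3 := zero_null (bc3_aff _ _ _) c3 a3.
set U := [set x | 0 < f1 x] `&` [set x | 0 < f2 x] `&` [set x | 0 < f3 x].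
have oU : open U.
  apply: openI; first apply: openI.
  - exact: open_gt0 (bc1_aff _ _ _).
  - exact: open_gt0 (bc2_aff _ _ _).
  - exact: open_gt0 (bc3_aff _ _ _).
have UO : U `<=` Omega M.
  rewrite /Omega -open_subsetE // => x [[h1 h2] h3].
  exists T; first by [].
  by apply/(hull_bc x D0); split; apply: ltW.
apply: (negligibleS _ (negligibleU (negligibleU n1 n2) n3)).
move=> x /= /not_implyP [hx nO].
have [h1 h2 h3] := (hull_bc x D0).1 hx.
apply: contrapT => H; apply: nO; apply: UO.
split; first split.
- by rewrite /= lt_neqAle h1 andbT; apply/eqP => e; apply: H; left; left; exact: (esym e).
- by rewrite /= lt_neqAle h2 andbT; apply/eqP => e; apply: H; left; right; exact: (esym e).
- by rewrite /= lt_neqAle h3 andbT; apply/eqP => e; apply: H; right; exact: (esym e).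
Qed.
End Hull2.

Section Hull3.
Variable R : realType.
Implicit Types T : tri R.

Lemma comb_bound (l1 l2 l3 a b c : R) : 0 <= l1 -> 0 <= l2 -> 0 <= l3 ->
  l1 + l2 + l3 = 1 ->
  l1 * a + l2 * b + l3 * c \in `[- (`|a| + `|b| + `|c|), `|a| + `|b| + `|c|].
Proof.
move=> h1 h2 h3 hs.
have := lexx `|a|; rewrite ler_norml => /andP[a1 a2].
have := lexx `|b|; rewrite ler_norml => /andP[b1 b2].
have := lexx `|c|; rewrite ler_norml => /andP[c1 c2].
rewrite in_itv /=; apply/andP; split; nra.
Qed.

Lemma leb_itv_fin (K : R) : lebesgue_measure `[- K, K]%classic \is a fin_num.
Proof.
by rewrite lebesgue_measure_itv /=; case: ifP.
Qed.

Lemma hull_fin T : det2 (tv1 T) (tv2 T) (tv3 T) != 0 ->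
  @leb2 R (hull T) \is a fin_num.
Proof.
move=> D0.
set K1 := `|(tv1 T).1| + `|(tv2 T).1| + `|(tv3 T).1|.
set K2 := `|(tv1 T).2| + `|(tv2 T).2| + `|(tv3 T).2|.
have sub : hull T `<=` `[- K1, K1]%classic `*` `[- K2, K2]%classic.
  move=> x [l1 [l2 [l3 [h1 h2 h3 hs [hx1 hx2]]]]]; split => /=.
    by rewrite hx1; apply: comb_bound.
  by rewrite hx2; apply: comb_bound.
have mB : measurable (`[- K1, K1]%classic `*` `[- K2, K2]%classic).
  by apply: measurableX; exact: measurable_itv.
have le := le_measure (@leb2 R) (mem_set (hull_meas D0)) (mem_set mB) sub.
have fB : @leb2 R (`[- K1, K1]%classic `*` `[- K2, K2]%classic) \is a fin_num.
  rewrite /leb2 product_measure1E; try exact: measurable_itv.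
  by apply: fin_numM; exact: leb_itv_fin.
rewrite ge0_fin_numE ?measure_ge0 //; apply: le_lt_trans le _.
by rewrite ltey_eq fB.
Qed.
End Hull3.

Lemma vert_v (R : realType) (M : seq (tri R)) ED (w v : pt R -> R) T y :
  test_fun M ED w v -> T \in M -> y \in tverts T -> v y = 0 \/ v y = 1 /\ 0 < w y.
Proof.
move=> [[_ Pv0] vD] TM yT.
case: (pselect (GammaD ED y)) => g; first by left; exact: Pv0.
have := vD y (conj (ex_intro _ T (conj TM yT)) g).
by case: ifP => wp ->; [right|left].
Qed.

Lemma leb01 (R : realType) : lebesgue_measure (`[0%R, 1%R]%classic : set R) = 1%E.
Proof. by rewrite lebesgue_measure_itv /= lte_fin ltr01 -EFinD subr0. Qed.

Unset Implicit Arguments.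
Unset Strict Implicit.

Theorem lemma4p8 (R : realType) (M : seq (tri R)) (ED : seq (pt R * pt R))
  (tmin tmax : R) (b : pt R -> R -> R) (Beta : R)
  (w u v : pt R -> R) (z : R -> pt R -> R) (T : tri R) (ai aj ak : pt R) :
  conforming M -> connected (Omega M) -> valid_dirichlet M ED ->
  0 < tmin -> tmin <= tmax -> tmax < pi / 2 ->
  (forall T', T' \in M -> angles_in tmin tmax T') ->
  0 <= Beta -> assumptions_b M b Beta ->
  P1 M ED w -> P1 M ED u -> (forall t, 0 <= t <= 1 -> P1 M ED (z t)) ->
  test_fun M ED w v -> in_Tc M v T ->
  perm_eq [:: ai; aj; ak] (tverts T) ->
  w aj <= w ai -> w ak <= w aj -> w ak <= 0 ->
  (\int[@leb2 R]_(x in hull T)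
      \int[lebesgue_measure]_(t in `[0%R, 1%R])
         (derive1 (b x) (z t x) * w x * v x)%:E
    >= (- (deltaT T w * (7 * Beta * area T / 6)))%:E)%E.
Proof.
move=> conf _ _ _ _ _ _ B0 [_ Hb] [Pw _] _ _ tf [TM _] _ _ _ _.
have D0 : det2 (tv1 T) (tv2 T) (tv3 T) != 0 by case: conf => nd _; exact: nd T TM.
have [al [be [ga hw]]] := Pw T TM.
have [[Pv _] _] := tf.
have [al' [be' [ga' hv]]] := Pv T TM.
set d := deltaT T w.
have d12 : `|w (tv1 T) - w (tv2 T)| <= d by rewrite /d /deltaT le_max lexx.
have d23 : `|w (tv2 T) - w (tv3 T)| <= d by rewrite /d /deltaT !le_max lexx orbT.
have d13 : `|w (tv1 T) - w (tv3 T)| <= d by rewrite /d /deltaT !le_max lexx !orbT.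
have d0 : 0 <= d := le_trans (normr_ge0 _) d12.
have vt1 : v (tv1 T) = 0 \/ v (tv1 T) = 1 /\ 0 < w (tv1 T).
  by apply: (vert_v tf TM); rewrite /tverts !inE eqxx ?orbT.
have vt2 : v (tv2 T) = 0 \/ v (tv2 T) = 1 /\ 0 < w (tv2 T).
  by apply: (vert_v tf TM); rewrite /tverts !inE eqxx ?orbT.
have vt3 : v (tv3 T) = 0 \/ v (tv3 T) = 1 /\ 0 < w (tv3 T).
  by apply: (vert_v tf TM); rewrite /tverts !inE eqxx ?orbT.
have pw : forall x, hull T x -> - d <= w x * v x.
  move=> x hx; have [l1 [l2 [l3 [h1 h2 h3 hs [hx1 hx2]]]]] := hx.
  rewrite (aff_comb hw hs hx1 hx2 hx) (aff_comb hv hs hx1 hx2 hx).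
  exact: key_ineq.
have inner : {ae @leb2 R, forall x, hull T x ->
    ((- (d * Beta))%:E <= \int[lebesgue_measure]_(t in `[0%R, 1%R])
         (derive1 (b x) (z t x) * w x * v x)%:E)%E}.
  have Fi : Filter (almost_everywhere (@leb2 R)) := ae_filter_ringOfSetsType _.
  move: (hull_ae_Omega TM D0) Hb; apply: (filterS2 Fi) => x hO hP hx.
  have [_ [_ hd]] := hP (hO hx).
  have le1 : forall t, ((- (d * Beta))%:E <= (derive1 (b x) (z t x) * w x * v x)%:E)%E.
    move=> t; rewrite lee_fin -mulrA; have := hd (z t x); have := pw x hx.
    move=> p /andP[e1 e2]; nra.
  rewrite -[X in (X <= _)%E](_ : (- ((d * Beta)%:E *
     lebesgue_measure (`[0%R, 1%R]%classic : set R)) = (- (d * Beta))%:E)%E);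
    last by rewrite leb01 mule1 EFinN.
  apply: int_lb; first exact: measurable_itv.
    exact: mulr_ge0.
  by apply: aeW => t _; exact: le1.
have := @int_lb _ _ R (@leb2 R) _ (hull_meas D0) _ (d * Beta) (mulr_ge0 d0 B0) inner.
have Hfin := hull_fin D0.
rewrite /area -[X in (_ * X)%E](fineK Hfin).
have A0 : 0 <= fine (@leb2 R (hull T)) by apply: fine_ge0; exact: measure_ge0.
move: (fine _) A0 => A A0; apply: le_trans.
rewrite -EFinM -EFinN lee_fin.
have P0 : 0 <= d * Beta * A by rewrite !mulr_ge0.
have -> : d * (7 * Beta * A / 6) = 7 / 6 * (d * Beta * A) by ring.
lra.
Qed.
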